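(* Let $T>0$, $0<\eta<T$, $0<\alpha <\frac{2T}{\eta ^{2}}$ and $0\leq \beta < \frac{2T-\alpha \eta ^{2}}{\alpha \eta ^{2}-2\eta +2T}$. If $y\in C([0,T],[0,\infty))$, then the unique solution $u$ of \[ u''(t)+y(t)=0,\ t\in(0,T),\qquad u(0)=\beta u(\eta),\quad u(T)=\alpha\int_0^\eta u(s)\,ds \] satisfies $u(t)\geq 0$ for all $t\in [0,T]$.
   Context: A solution is a function $u\in C^2([0,T])$ satisfying the differential equation on $(0,T)$ and the two boundary conditions; under the stated hypotheses this problem has a unique solution. *)

(* Defs.v *)
From Stdlib Require Import Reals.
From Coquelicot Require Import Coquelicot.
Open Scope R_scope.

Definition cont_within (a b : R) (f : R -> R) (t : R) : Prop :=
  filterlim f (within (fun s => a <= s <= b) (locally t)) (locally (f t)).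

Definition deriv_within (a b : R) (f : R -> R) (t l : R) : Prop :=
  filterlim (fun h => (f (t + h) - f t) / h)
    (within (fun h => h <> 0 /\ a <= t + h <= b) (locally 0)) (locally l).

Definition C0_on (a b : R) (f : R -> R) : Prop :=
  forall t, a <= t <= b -> cont_within a b f t.

Definition C2_on_with (a b : R) (u u1 u2 : R -> R) : Prop :=
  (forall t, a <= t <= b -> deriv_within a b u t (u1 t)) /\
  (forall t, a <= t <= b -> deriv_within a b u1 t (u2 t)) /\
  C0_on a b u2.

(* Main.v *)
Require Import Defs.
From Stdlib Require Import Reals Lra.
From Coquelicot Require Import Coquelicot.
Open Scope R_scope.

Lemma ballR (x e y : R) : ball x e y <-> Rabs (y - x) < e.
Proof. reflexivity. Qed.

Lemma dw_eps a b f t l : deriv_within a b f t l ->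
  forall eps, 0 < eps -> exists d, 0 < d /\ forall h, h <> 0 -> a <= t + h <= b ->
   Rabs h < d -> Rabs ((f (t+h) - f t)/h - l) < eps.
Proof.
  intros H eps Heps.
  destruct (proj1 (filterlim_locally _ _) H (mkposreal eps Heps)) as [d Hd].
  exists d; split; [apply cond_pos|].
  intros h H1 H2 H3. apply (Hd h). apply ballR. now rewrite Rminus_0_r. now split.
Qed.

Lemma dw_cont a b f t l : deriv_within a b f t l ->
  forall eps, 0 < eps -> exists d, 0 < d /\ forall s, a <= s <= b ->
   Rabs (s - t) < d -> Rabs (f s - f t) < eps.
Proof.
  intros H eps Heps.
  destruct (dw_eps _ _ _ _ _ H 1 Rlt_0_1) as [d1 [Hd1 Hq]].
  assert (Hl : 0 < Rabs l + 1) by (pose proof (Rabs_pos l); lra).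
  exists (Rmin d1 (eps / (Rabs l + 1))). split.
  { apply Rmin_glb_lt; [lra|]. apply Rdiv_lt_0_compat; lra. }
  intros s Hs Hst.
  destruct (Req_dec s t) as [->|Hne].
  { rewrite Rminus_diag, Rabs_R0; lra. }
  set (h := s - t).
  assert (Hh : h <> 0) by (unfold h; lra).
  assert (Hs' : s = t + h) by (unfold h; ring).
  rewrite Hs' in Hs |- *.
  assert (Hhd1 : Rabs h < d1) by (eapply Rlt_le_trans; [exact Hst|apply Rmin_l]).
  assert (Hhd2 : Rabs h < eps / (Rabs l + 1)) by (eapply Rlt_le_trans; [exact Hst|apply Rmin_r]).
  specialize (Hq h Hh Hs Hhd1).
  set (q := (f (t+h) - f t)/h) in *.
  assert (E : f (t+h) - f t = q * h) by (unfold q; field; exact Hh).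
  rewrite E, Rabs_mult.
  assert (Hq2 : Rabs q < Rabs l + 1).
  { pose proof (Rabs_triang (q - l) l). replace (q - l + l) with q in H0 by ring. lra. }
  assert (Hh3 : Rabs h * (Rabs l + 1) < eps).
  { apply (Rmult_lt_compat_r (Rabs l + 1)) in Hhd2; [|lra].
    unfold Rdiv in Hhd2. rewrite Rmult_assoc, Rinv_l in Hhd2; lra. }
  pose proof (Rabs_pos q). pose proof (Rabs_pos h).
  nra.
Qed.

Lemma dw_int a b f g t l : a < t < b -> deriv_within a b f t l ->
  (forall x, a <= x <= b -> g x = f x) -> derivable_pt_lim g t l.
Proof.
  intros Ht H Hg eps Heps.
  destruct (dw_eps _ _ _ _ _ H eps Heps) as [d [Hd Hq]].
  assert (Hp : 0 < Rmin d (Rmin (t - a) (b - t))).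
  { repeat apply Rmin_glb_lt; lra. }
  exists (mkposreal _ Hp). simpl. intros h Hh Hhd.
  assert (H1 : Rabs h < d) by (eapply Rlt_le_trans; [exact Hhd|apply Rmin_l]).
  assert (H2 : Rabs h < Rmin (t - a) (b - t)) by (eapply Rlt_le_trans; [exact Hhd|apply Rmin_r]).
  assert (H3 : Rabs h < t - a) by (eapply Rlt_le_trans; [exact H2|apply Rmin_l]).
  assert (H4 : Rabs h < b - t) by (eapply Rlt_le_trans; [exact H2|apply Rmin_r]).
  assert (Hr : a <= t + h <= b).
  { pose proof (Rle_abs h). pose proof (Rle_abs (-h)). rewrite Rabs_Ropp in H5. lra. }
  rewrite (Hg (t+h)) by exact Hr. rewrite (Hg t) by lra.
  apply Hq; assumption.
Qed.

Definition clamp a b x := Rmax a (Rmin b x).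

Lemma clamp_in a b x : a <= b -> a <= clamp a b x <= b.
Proof. intros; unfold clamp, Rmax, Rmin; repeat destruct Rle_dec; lra. Qed.

Lemma clamp_id a b x : a <= x <= b -> clamp a b x = x.
Proof. intros; unfold clamp, Rmax, Rmin; repeat destruct Rle_dec; lra. Qed.

Lemma clamp_lip a b x y : a <= b -> Rabs (clamp a b x - clamp a b y) <= Rabs (x - y).
Proof. intros; unfold clamp, Rmax, Rmin, Rabs; repeat destruct Rle_dec; repeat destruct Rcase_abs; lra. Qed.

Lemma ext_cont a b f f1 x : a <= b ->
  (forall t, a <= t <= b -> deriv_within a b f t (f1 t)) ->
  continuity_pt (fun z => f (clamp a b z)) x.
Proof.
  intros Hab Hd eps Heps.
  destruct (dw_cont _ _ _ _ _ (Hd (clamp a b x) (clamp_in a b x Hab)) eps Heps) as [d [Hd0 Hc]].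
  exists d; split; [exact Hd0|].
  intros z [_ Hz]. simpl in *. unfold R_dist in *.
  apply Hc. apply clamp_in; auto.
  eapply Rle_lt_trans; [apply clamp_lip; auto| exact Hz].
Qed.

Lemma mvt_open f df a b : a < b ->
  (forall x, a < x < b -> derivable_pt_lim f x (df x)) ->
  (forall x, a <= x <= b -> continuity_pt f x) ->
  exists c, a < c < b /\ f b - f a = df c * (b - a).
Proof.
  intros Hab Hd Hc.
  pose (pr1 := fun c (P : a < c < b) =>
     exist (fun l => derivable_pt_abs f c l) (df c) (Hd c P) : derivable_pt f c).
  destruct (MVT f id a b pr1 (fun c _ => derivable_pt_id c) Hab Hc
     (fun c _ => derivable_continuous_pt id c (derivable_pt_id c))) as [c [P E]].
  exists c; split; auto. rewrite derive_pt_id in E. simpl in E. unfold id in E. lra.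
Qed.

Lemma lin_int (a s e : R) : RInt (fun x => a + s * x) 0 e = a * e + s * e ^ 2 / 2.
Proof.
  apply is_RInt_unique.
  assert (H := is_RInt_derive (fun x => a * x + s * x ^ 2 / 2) (fun x => a + s * x) 0 e).
  match type of H with _ -> _ -> is_RInt _ _ _ ?v => replace (a * e + s * e ^ 2 / 2) with v end.
  - apply H.
    + intros x _. auto_derive; auto; field.
    + intros x _. apply continuity_pt_filterlim. reg.
  - unfold minus, plus, opp; simpl. field.
Qed.

Theorem lemma2p2 (T eta alpha beta : R) (y u u1 u2 : R -> R) :
  0 < T -> 0 < eta -> eta < T ->
  0 < alpha -> alpha < 2 * T / (eta ^ 2) ->
  0 <= beta ->
  beta < (2 * T - alpha * eta ^ 2) / (alpha * eta ^ 2 - 2 * eta + 2 * T) ->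
  C0_on 0 T y -> (forall t, 0 <= t <= T -> 0 <= y t) ->
  C2_on_with 0 T u u1 u2 ->
  (forall t, 0 < t < T -> u2 t + y t = 0) ->
  u 0 = beta * u eta ->
  u T = alpha * RInt u 0 eta ->
  forall t, 0 <= t <= T -> 0 <= u t.
Proof.
  intros HT He HeT Ha Ha2 Hb Hb2 _ Hy [Hd1 [Hd2 _]] Heq Hu0 HuT.
  set (ue := fun z => u (clamp 0 T z)).
  assert (Hue : forall x, 0 <= x <= T -> ue x = u x).
  { intros x Hx. unfold ue. rewrite clamp_id; auto. }
  assert (Hcont : forall x, continuity_pt ue x).
  { intro x. apply (ext_cont 0 T u u1); auto; lra. }
  assert (Hder : forall x, 0 < x < T -> derivable_pt_lim ue x (u1 x)).
  { intros x Hx. apply (dw_int 0 T u ue x); [lra | apply Hd1; lra | exact Hue]. }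
  assert (Hmono : forall c1 c2, 0 < c1 -> c1 < c2 -> c2 < T -> u1 c2 <= u1 c1).
  { intros c1 c2 H1 H2 H3.
    destruct (MVT_cor2 u1 u2 c1 c2 H2) as [c [E Hc]].
    { intros c Hc. apply (dw_int 0 T u1 u1 c); [lra | apply Hd2; lra | auto]. }
    assert (u2 c <= 0). { specialize (Heq c ltac:(lra)). specialize (Hy c ltac:(lra)). lra. }
    nra. }
  set (s := (u T - u 0) / T).
  assert (HsT : s * T = u T - u 0) by (unfold s; field; lra).
  assert (Hconc : forall t, 0 <= t <= T -> u 0 + s * t <= u t).
  { intros t Ht. apply Rnot_lt_le; intro Hlt.
    assert (t <> 0) by (intro; subst; lra).
    assert (t <> T) by (intro; subst; lra).
    destruct (mvt_open ue u1 0 t ltac:(lra)) as [c1 [Hc1 E1]].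
    { intros x Hx; apply Hder; lra. }
    { intros; apply Hcont. }
    destruct (mvt_open ue u1 t T ltac:(lra)) as [c2 [Hc2 E2]].
    { intros x Hx; apply Hder; lra. }
    { intros; apply Hcont. }
    rewrite !Hue in E1, E2 by lra.
    specialize (Hmono c1 c2 ltac:(lra) ltac:(lra) ltac:(lra)).
    assert (u1 c1 < s) by (apply (Rmult_lt_reg_r t); lra).
    assert (s < u1 c2) by (apply (Rmult_lt_reg_r (T - t)); lra).
    lra. }
  assert (Hint : ex_RInt u 0 eta).
  { apply (ex_RInt_ext ue).
    { intros x Hx. rewrite Rmin_left, Rmax_right in Hx by lra. apply Hue; lra. }
    apply (@ex_RInt_continuous R_CompleteNormedModule). intros z _. apply continuity_pt_filterlim, Hcont. }
  assert (HI : u 0 * eta + s * eta ^ 2 / 2 <= RInt u 0 eta).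
  { rewrite <- lin_int. apply RInt_le; [lra| |exact Hint|].
    - apply (@ex_RInt_continuous R_CompleteNormedModule). intros z _. apply continuity_pt_filterlim. reg.
    - intros x Hx. apply Hconc; lra. }
  assert (Hue2 := Hconc eta ltac:(lra)).
  set (a := u 0) in *. set (b := u T) in *. set (I := RInt u 0 eta) in *.
  set (v := u eta) in *.
  set (k := 2 * T - alpha * eta ^ 2).
  set (D := alpha * eta ^ 2 - 2 * eta + 2 * T).
  assert (He2 : 0 < eta ^ 2) by (apply pow_lt; lra).
  assert (Hk : 0 < k).
  { unfold k. apply (Rmult_lt_compat_r (eta ^ 2)) in Ha2; [|lra].
    unfold Rdiv in Ha2. rewrite Rmult_assoc, Rinv_l in Ha2; lra. }
  assert (HD : 0 < D) by (unfold D; nra).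
  assert (HbD : beta * D < k).
  { apply (Rmult_lt_compat_r D) in Hb2; [|lra]. fold k D in Hb2.
    unfold Rdiv in Hb2. rewrite Rmult_assoc, Rinv_l in Hb2; lra. }
  assert (Hi : b * k >= alpha * a * eta * (2 * T - eta)).
  { assert (2 * T * I >= 2 * T * a * eta + (b - a) * eta ^ 2).
    { assert (2 * T * (s * eta ^ 2 / 2) = (b - a) * eta ^ 2) by (rewrite <- HsT; field).
      nra. }
    assert (alpha * (2 * T * I) >= alpha * (2 * T * a * eta + (b - a) * eta ^ 2)) by (apply Rle_ge, Rmult_le_compat_l; lra).
    unfold k. replace (alpha * (2 * T * I)) with (2 * T * b) in H0 by (rewrite HuT; ring). nra. }
  assert (Hii : T * v >= T * a + (b - a) * eta).
  { rewrite <- HsT. nra. }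
  assert (Ha0 : 0 <= a).
  { apply Rnot_lt_le; intro Hneg.
    assert (Hbp : 0 < beta).
    { destruct Hb as [Hb|Hb]; auto. rewrite <- Hb in Hu0. lra. }
    assert (T * k * a >= beta * a * T * D).
    { assert (T * k * a = beta * k * (T * v)) by (rewrite Hu0; ring).
      assert (beta * eta * (b * k) >= beta * eta * (alpha * a * eta * (2 * T - eta))).
      { apply Rle_ge, Rmult_le_compat_l; [nra|lra]. }
      assert (beta * a * T * D = beta * k * a * (T - eta) + beta * eta * alpha * a * eta * (2 * T - eta))
        by (unfold k, D; ring).
      assert (beta * k * (T * v) >= beta * k * (T * a + (b - a) * eta)) by (apply Rle_ge, Rmult_le_compat_l; nra).
      lra. }
    assert (0 < T * (k - beta * D)) by (apply Rmult_lt_0_compat; lra).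
    assert (T * (k - beta * D) * a < 0) by (apply Rmult_pos_neg; lra). nra. }
  assert (Hb0 : 0 <= b).
  { assert (0 <= alpha * a * eta * (2 * T - eta)).
    { apply Rmult_le_pos; [|lra]. apply Rmult_le_pos; [|lra]. nra. }
    nra. }
  intros t Ht. specialize (Hconc t Ht).
  assert (s * t * T = (b - a) * t) by (rewrite <- HsT; ring).
  nra.
Qed.
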